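(* Let $l\ge1$, $m=2l$, and consider the $[[2^{2l},l+1,2^l]]$ phantom quantum Reed–Muller code, with logical states $|c\rangle_L\propto\sum_{s\in\mathrm{rs}(H_X)}|cL_X+s\rangle$ for $c\in\mathbb F_2^{l+1}$, where the rows of $L_X$ are $\mathrm{ev}(x_1\cdots x_{l-1}x_j)$ for $j=l,l+1,\dots,2l$ in this order. For an involution $\tau$ of $\mathbb F_2^{2l}$ let $F_\tau$ be the diagonal circuit applying $S=\mathrm{diag}(1,i)$ to every qubit $a$ with $\tau(a)=a$ and $\mathrm{CZ}$ to every pair $\{a,\tau(a)\}$ with $\tau(a)\neq a$. (a) Let $\tau_{SS}(a)_i=a_{2l+1-i}+1$ for $i\in[2l]$. Then $F_{\tau_{SS}}$ preserves the codespace and $F_{\tau_{SS}}|c\rangle_L=i^{c_1+c_2}|c\rangle_L$ for all $c$ (logical $S\otimes S$ on logical qubits 1 and 2, identity on the others). (b) Let $\tau_{CZ}(a)_i=a_{2l+1-i}+1$ for $i\in[2l]\setminus\{l,l+1\}$, $\tau_{CZ}(a)_l=a_l+1$, $\tau_{CZ}(a)_{l+1}=a_{l+1}+1$. Then $F_{\tau_{CZ}}$ preserves the codespace and $F_{\tau_{CZ}}|c\rangle_L=(-1)^{c_1c_2}|c\rangle_L$ for all $c$ (logical CZ between logical qubits 1 and 2).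
   Context: Coordinates of $2^{2l}$ qubits are identified with $\mathbb F_2^{2l}$; $\mathrm{ev}(f)=(f(a))_{a\in\mathbb F_2^{2l}}$ for Boolean polynomials $f$; $\mathrm{RM}(r,m)$ is the span of evaluation vectors of monomials of degree $\le r$ ($\{0\}$ if $r<0$). For $S\subseteq[m]$, $x_S=\prod_{i\in S}x_i$ and $\hat x_S=\prod_{i\notin S}(1+x_i)$. The phantom qRM code (here with $m=2l$) is the CSS code with $\mathrm{rs}(H_X)=\mathrm{RM}(l-1,m)$ and $\mathrm{rs}(H_Z)=\mathrm{RM}(m-l-1,m)+\mathrm{span}\{\mathrm{ev}(\hat x_S):|S|=l,\ S\ne\{1,\dots,l-1,j\}\text{ for all }j\in\{l,\dots,m\}\}$; its logical qubit $t$ corresponds to $X$-logical $x_1\cdots x_{l-1}x_{l+t-1}$. *)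

(* Defs.v *)
From HB Require Import structures.
From mathcomp Require Import all_boot all_order all_algebra algC.
Set Implicit Arguments. Unset Strict Implicit. Unset Printing Implicit Defensive.
Import Order.TTheory GRing.Theory Num.Theory.
Local Open Scope ring_scope.

(* Points of F_2^m (coordinates 0-based: paper's coordinate i is ordinal i-1). *)
Notation Pt m := {ffun 'I_m -> 'F_2}.
(* Binary words of length 2^m indexed by points (classical bit strings on the qubits). *)
Notation word m := {ffun Pt m -> 'F_2}.
(* Quantum states on the 2^m qubits: amplitude for each computational basis string. *)
Notation state m := {ffun word m -> algC}.

Definition mono (m : nat) (S : {set 'I_m}) (a : Pt m) : 'F_2 := \prod_(i in S) a i.

Definition RM (r m : nat) : {set word m} :=
  [set w : word m | [exists beta : {ffun {set 'I_m} -> 'F_2},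
     w == [ffun a => \sum_(S : {set 'I_m} | (#|S| <= r)%N) beta S * mono S a]]].

(* Support of the j-th (0-based) row of L_X: x_1 ... x_{l-1} x_{l+j} (1-based). *)
Definition LXsupp (l : nat) (j : nat) : {set 'I_(l.*2)} :=
  [set i : 'I_(l.*2) | (val i < l.-1)%N || (val i == l.-1 + j)%N].

Definition cLX (l : nat) (c : {ffun 'I_(l.+1) -> 'F_2}) : word (l.*2) :=
  [ffun a => \sum_(j : 'I_(l.+1)) c j * mono (LXsupp l j) a].

(* Unnormalized logical state |c>_L = sum_{s in rs(H_X)} |c L_X + s>, rs(H_X) = RM(l-1,2l). *)
Definition logical (l : nat) (c : {ffun 'I_(l.+1) -> 'F_2}) : state (l.*2) :=
  [ffun x : word (l.*2) =>
     \sum_(s in RM l.-1 (l.*2)) (if x == cLX c + s then 1 else 0)].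

Definition codespace (l : nat) (psi : state (l.*2)) : Prop :=
  exists alpha : {ffun 'I_(l.+1) -> 'F_2} -> algC,
    psi = [ffun x => \sum_(c : {ffun 'I_(l.+1) -> 'F_2}) alpha c * logical c x].

Definition Fphase (m : nat) (tau : Pt m -> Pt m) (x : word m) : algC :=
  (\prod_(a : Pt m | tau a == a) (if x a == 1 then 'i else 1)) *
  (\prod_(P : {set Pt m} | [exists a : Pt m, (tau a != a) && (P == [set a; tau a])])
      (if [forall b in P, x b == 1] then -1 else 1)).

Definition Fcirc (m : nat) (tau : Pt m -> Pt m) (psi : state m) : state m :=
  [ffun x => Fphase tau x * psi x].

Definition tauSS (l : nat) (a : Pt (l.*2)) : Pt (l.*2) :=
  [ffun i => a (rev_ord i) + 1].

Definition tauCZ (l : nat) (a : Pt (l.*2)) : Pt (l.*2) :=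
  [ffun i => if (val i == l.-1)%N || (val i == l)%N then a i + 1 else a (rev_ord i) + 1].

Definition bitphase (b : 'F_2) (z : algC) : algC := if b == 1 then z else 1.

(* Main.v *)
Require Import Defs.
From mathcomp Require Import all_boot all_order all_algebra algC.
From mathcomp Require Import zify ring.
From Stdlib Require Import FunctionalExtensionality.
Set Implicit Arguments. Unset Strict Implicit.
Local Open Scope ring_scope.
Import GRing.Theory Num.Theory.

Lemma F2cases (b : 'F_2) : b = 0 \/ b = 1.
Proof. by case: b => [[|[|n]] //] Hn; [left|right]; apply/val_inj. Qed.
Lemma F2_11 : (1 + 1 : 'F_2) = 0. Proof. by apply/val_inj. Qed.
Lemma Z4_4 : (4%:R : 'Z_4) = 0. Proof. by apply/val_inj. Qed.

Definition L (b : 'F_2) : 'Z_4 := (b == 1)%:R.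
Lemma L0 : L 0 = 0. Proof. by []. Qed.
Lemma L1 : L 1 = 1. Proof. by []. Qed.
Lemma LM u v : L (u * v) = L u * L v.
Proof. by case: (F2cases u) => ->; case: (F2cases v) => ->; rewrite ?mul0r ?mulr0 ?mul1r ?L0 ?L1 ?mul0r ?mulr1. Qed.
Lemma LD u v : L (u + v) = L u + L v - 2 * L u * L v.
Proof.
case: (F2cases u) => ->; case: (F2cases v) => ->;
  rewrite ?add0r ?addr0 ?F2_11 ?L0 ?L1; ring.
Qed.

Lemma sumF2 (F : 'F_2 -> 'Z_4) : \sum_b F b = F 0 + F 1.
Proof.
rewrite (bigD1 0) //= (bigD1 1) //= big1 ?addr0 // => b /andP[b0 b1].
by case: (F2cases b) b0 b1 => ->; rewrite eqxx.
Qed.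

Lemma iexp4 n (z : 'Z_4) : (n%:R : 'Z_4) = z -> ('i : algC) ^+ n = 'i ^+ val z.
Proof.
move<-; rewrite Zp_nat.
have -> : val (inZp n : 'Z_4) = (n %% 4)%N by [].
have i4 : ('i : algC) ^+ 4 = 1.
  by rewrite (_ : 4%N = (2 * 2)%N) // exprM sqrCi sqrrN expr1n.
by rewrite {1}(divn_eq n 4) exprD mulnC exprM i4 expr1n mul1r.
Qed.

Lemma forall_set2 (T : finType) (u v : T) (f : pred T) :
  [forall b in [set u; v], f b] = f u && f v.
Proof.
apply/forall_inP/andP => [H|[Hu Hv] b]; first by split; apply: H; rewrite !inE eqxx ?orbT.
by rewrite !inE => /orP[] /eqP ->.
Qed.

Section Gen.
Variable m : nat.
Variable sg : 'I_m -> 'I_m.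
Hypothesis sgK : involutive sg.

Definition tauG (a : Pt m) : Pt m := [ffun i => a (sg i) + 1].
Lemma tauGK : involutive tauG.
Proof. by move=> a; apply/ffunP=> i; rewrite !ffunE sgK -addrA F2_11 addr0. Qed.

Definition MM (x y : word m) : 'Z_4 := \sum_a L (x a) * L (y (tauG a)).
Definition NN x := MM x x.
Definition mm2 x y := 2 * MM x y.

Lemma sum_tau (F : Pt m -> 'Z_4) : \sum_a F (tauG a) = \sum_a F a.
Proof. by rewrite [RHS](reindex_inj (can_inj tauGK)). Qed.

Lemma MMC x y : MM x y = MM y x.
Proof.
rewrite /MM -[RHS]sum_tau; apply: eq_bigr => a _; by rewrite tauGK mulrC.
Qed.
Lemma mm2C x y : mm2 x y = mm2 y x.
Proof. by rewrite /mm2 MMC. Qed.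

Lemma MM0 x : MM x 0 = 0.
Proof. by rewrite /MM big1 // => a _; rewrite ffunE L0 mulr0. Qed.
Lemma mm20 x : mm2 x 0 = 0.
Proof. by rewrite /mm2 MM0 mulr0. Qed.
Lemma NN0 : NN 0 = 0.
Proof. exact: MM0. Qed.

Lemma mm2D v w1 w2 : mm2 v (w1 + w2) = mm2 v w1 + mm2 v w2.
Proof.
rewrite /mm2 /MM !mulr_sumr -big_split; apply: eq_bigr => a _.
rewrite ffunE LD.
set p := L (v a); set q := L (w1 _); set r := L (w2 _).
have -> : 2 * (p * (q + r - 2 * q * r)) = 2 * (p * q) + 2 * (p * r) - 4%:R * (p*q*r) by ring.
by rewrite Z4_4 mul0r subr0.
Qed.

Lemma mm2_sum v (I : Type) (r : seq I) (P : pred I) (F : I -> word m) :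
  mm2 v (\sum_(i <- r | P i) F i) = \sum_(i <- r | P i) mm2 v (F i).
Proof. exact: (big_morph (mm2 v) (mm2D v) (mm20 v)). Qed.

Lemma sum2 (F : Pt m -> 'Z_4) : \sum_a 2 * (F a + F (tauG a)) = 0.
Proof.
rewrite -mulr_sumr big_split /= sum_tau.
have -> : forall S : 'Z_4, 2 * (S + S) = 4%:R * S by move=> S; ring.
by rewrite Z4_4 mul0r.
Qed.

Lemma NN_add x y : NN (x + y) = NN x + NN y + mm2 x y.
Proof.
have E : forall a, L ((x + y) a) * L ((x + y) (tauG a)) =
  L (x a) * L (x (tauG a)) + L (y a) * L (y (tauG a)) +
  (L (x a) * L (y (tauG a)) + L (y a) * L (x (tauG a))) +
  2 * ((fun a => L (x a) * L (y a) * L (x (tauG a))) a +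
       (fun a => L (x a) * L (y a) * L (x (tauG a))) (tauG a)) +
  2 * ((fun a => L (x a) * L (y a) * L (y (tauG a))) a +
       (fun a => L (x a) * L (y a) * L (y (tauG a))) (tauG a)).
  move=> a; rewrite !ffunE !LD /= tauGK.
  set p := L (x a); set q := L (y a); set p' := L (x _); set q' := L (y _).
  have -> : (p + q - 2 * p * q) * (p' + q' - 2 * p' * q') =
    p * p' + q * q' + (p * q' + q * p') + 2 * (p * q * p' + p' * q' * p) +
    2 * (p * q * q' + p' * q' * q) +
    4%:R * (p * q * p' * q' - p * q * p' - p' * q' * p - p * q * q' - p' * q' * q) by ring.
  by rewrite Z4_4 mul0r addr0.
rewrite /NN /MM (eq_bigr _ (fun a _ => E a)) !big_split /= !sum2 !addr0.
rewrite -/(MM x y) -/(MM y x) (MMC y x) /mm2 /MM; ring.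
Qed.

Lemma NN_sum (I : Type) (r : seq I) (P : pred I) (F : I -> word m) :
  (forall i, P i -> NN (F i) = 0) ->
  (forall i j, P i -> P j -> mm2 (F i) (F j) = 0) ->
  NN (\sum_(i <- r | P i) F i) = 0.
Proof.
move=> H1 H2; elim: r => [|i r IH]; first by rewrite big_nil NN0.
rewrite big_cons; case: ifP => Pi //.
rewrite NN_add IH H1 // mm2_sum big1 ?addr0 // => j Pj; exact: H2.
Qed.

Definition cnt (x : word m) := #|[pred a | (x a == 1) && (x (tauG a) == 1)]|.

Lemma NN_card x : NN x = (cnt x)%:R.
Proof.
rewrite /NN /MM /cnt -sumr_const [RHS]big_mkcond /=; apply: eq_bigr => a _.
by rewrite /L inE -natrM mulnb; case: (_ && _).
Qed.

Lemma Fphase_card x : Fphase tauG x = 'i ^+ cnt x.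
Proof.
set q := fun a => if (x a == 1) && (x (tauG a) == 1) then ('i : algC) else 1.
have -> : 'i ^+ cnt x = \prod_a q a.
  by rewrite /cnt -prodr_const big_mkcond /=; apply: eq_bigr => a _; rewrite inE.
rewrite (bigID (fun a => tauG a == a)) /=.
congr (_ * _).
  by apply: eq_bigr => a /eqP Ha; rewrite /q Ha andbb.
rewrite (partition_big (fun a => [set a; tauG a])
   (fun P => [exists a, (tauG a != a) && (P == [set a; tauG a])])) /=; last first.
  by move=> i Hi; apply/existsP; exists i; rewrite Hi eqxx.
apply: eq_bigr => P /existsP[a0 /andP[Ha0 /eqP ->]].
rewrite (bigD1 a0) /=; last by rewrite Ha0 eqxx.
rewrite (bigD1 (tauG a0)) /=; last first.
  by rewrite tauGK eq_sym Ha0 setUC eqxx.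
rewrite big1 ?mulr1; last first.
  move=> i /andP[/andP[/andP[_ /eqP Hi] n1] n2].
  have : i \in [set a0; tauG a0] by rewrite -Hi !inE eqxx.
  by rewrite !inE (negbTE n1) (negbTE n2).
rewrite forall_set2 /q tauGK [(x a0 == 1) && _]andbC.
by case: (_ && _); rewrite ?mulr1 // -expr2 sqrCi.
Qed.

Lemma Fphase_NN x (z : 'Z_4) : NN x = z -> Fphase tauG x = 'i ^+ val z.
Proof. by rewrite NN_card Fphase_card => /iexp4. Qed.

Definition monoF (S : {set 'I_m}) : word m := [ffun a => mono S a].

Lemma MM_mono S T : MM (monoF S) (monoF T) =
  \prod_i ((i \notin S)%:R + (sg i \notin T)%:R).
Proof.
rewrite /MM.
pose f i (b : 'F_2) := (if i \in S then L b else 1) * (if sg i \in T then L (b + 1) else 1).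
have E : forall a : Pt m, L (monoF S a) * L (monoF T (tauG a)) = \prod_i f i (a i).
  move=> a; rewrite !ffunE /mono !(big_morph L LM L1).
  have H2 : \prod_(i in T) L (tauG a i) = \prod_i (if sg i \in T then L (a i + 1) else 1).
    rewrite (reindex_inj (can_inj sgK)) big_mkcond /=; apply: eq_bigr => i _.
    by rewrite ffunE sgK.
  by rewrite H2 big_mkcond -big_split.
rewrite (eq_bigr _ (fun a _ => E a)) -bigA_distr_bigA; apply: eq_bigr => i _.
rewrite sumF2 /f add0r F2_11 L0 L1.
by case: (i \in S); case: (sg i \in T); rewrite /= ?mulr1 ?mul1r ?mul0r ?mulr0 ?addr0 ?add0r.
Qed.

Lemma hitZ (S T : {set 'I_m}) : (exists i, (i \in S) && (sg i \in T)) -> MM (monoF S) (monoF T) = 0.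
Proof.
case=> i /andP[h1 h2]; rewrite MM_mono (bigD1 i) //= h1 h2 /= add0r mul0r //.
Qed.

Lemma compl_big k (S T : {set 'I_m}) : (#|S| + #|T| + k <= m)%N ->
  (k <= #|~: (S :|: sg @^-1: T)|)%N.
Proof.
move=> H.
have [H1 _] := leq_card_setU S (sg @^-1: T).
rewrite card_preimset in H1; last exact: can_inj sgK.
have := cardsC (S :|: sg @^-1: T); rewrite card_ord.
lia.
Qed.

Lemma free1 (S T : {set 'I_m}) : (#|S| + #|T| < m)%N -> mm2 (monoF S) (monoF T) = 0.
Proof.
move=> H; have /card_gt0P[i] : (0 < #|~: (S :|: sg @^-1: T)|)%N.
  by apply: compl_big; lia.
rewrite !inE negb_or => /andP[h1 h2].
rewrite /mm2 MM_mono (bigD1 i) //= h1 h2 /=.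
set r := \prod_(_ | _) _.
have -> : 2 * ((1%N%:R + 1%N%:R) * r) = 4%:R * r :> 'Z_4 by ring.
by rewrite Z4_4 mul0r.
Qed.

Lemma free2 (S T : {set 'I_m}) : (#|S| + #|T| + 2 <= m)%N -> MM (monoF S) (monoF T) = 0.
Proof.
move=> H; have /card_gt1P[i [j [hi hj ij]]] := @compl_big 2 S T H.
move: hi hj; rewrite !inE !negb_or => /andP[h1 h2] /andP[h3 h4].
rewrite MM_mono (bigD1 i) //= (bigD1 j) /=; last by rewrite eq_sym.
rewrite h1 h2 h3 h4 /=.
set r := \prod_(_ | _) _.
have -> : (1%N%:R + 1%N%:R) * ((1%N%:R + 1%N%:R) * r) = 4%:R * r :> 'Z_4 by ring.
by rewrite Z4_4 mul0r.
Qed.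

Lemma exact1 (S T : {set 'I_m}) : (forall i, (i \in S) != (sg i \in T)) -> MM (monoF S) (monoF T) = 1.
Proof.
move=> H; rewrite MM_mono big1 // => i _; have := H i.
by case: (i \in S); case: (sg i \in T) => //= _; rewrite ?add0r ?addr0.
Qed.

End Gen.

Section Spec.
Variable l : nat.
Hypothesis hl : (0 < l)%N.
Variable sg : 'I_(l.*2) -> 'I_(l.*2).
Hypothesis sgK : involutive sg.
Hypothesis sgrev : forall i : 'I_(l.*2), (l < i)%N -> sg i = rev_ord i.

Definition wc (b : 'F_2) (S : {set 'I_(l.*2)}) : word (l.*2) := [ffun a => b * mono S a].

Lemma wc_cases b S : wc b S = 0 \/ wc b S = monoF S.
Proof.
by case: (F2cases b) => ->; [left|right]; apply/ffunP => a; rewrite !ffunE ?mul0r ?mul1r.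
Qed.

Lemma NN_wc b S : NN sg (wc b S) = L b * NN sg (monoF S).
Proof.
case: (F2cases b) => ->; rewrite ?L0 ?L1 ?mul0r ?mul1r.
  by rewrite (_ : wc 0 S = 0) ?NN0 //; apply/ffunP => a; rewrite !ffunE mul0r.
by rewrite (_ : wc 1 S = monoF S) //; apply/ffunP => a; rewrite !ffunE mul1r.
Qed.

Lemma mm2_wc b b' S T : mm2 sg (wc b S) (wc b' T) = L b * L b' * mm2 sg (monoF S) (monoF T).
Proof.
have E0 : forall U, wc 0 U = 0 by move=> U; apply/ffunP => a; rewrite !ffunE mul0r.
have E1 : forall U, wc 1 U = monoF U by move=> U; apply/ffunP => a; rewrite !ffunE mul1r.
case: (F2cases b) => ->; case: (F2cases b') => ->;
  rewrite ?E0 ?E1 ?L0 ?L1 ?mul0r ?mulr0 ?mul1r ?mm20 //.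
all: try by rewrite mm2C // mm20.
by rewrite mul0r.
Qed.

Lemma cardLX (j : 'I_(l.+1)) : (#|LXsupp l j| <= l)%N.
Proof.
rewrite cardE -(size_map val).
apply: (leq_trans (uniq_leq_size (s2 := rcons (iota 0 l.-1) (l.-1 + j)) _ _)).
- by rewrite (map_inj_uniq val_inj) enum_uniq.
- move=> x /mapP[i]; rewrite mem_enum /LXsupp inE => /orP[H|/eqP H] ->;
    rewrite mem_rcons inE mem_iota ?H ?eqxx //=.
  by apply/orP; right; lia.
- by rewrite size_rcons size_iota; lia.
Qed.

Lemma G1 b (S : {set 'I_(l.*2)}) : (#|S| <= l.-1)%N -> NN sg (wc b S) = 0.
Proof. by move=> H; rewrite NN_wc /NN free2 ?mulr0 //; lia. Qed.

Lemma G2 b b' (S T : {set 'I_(l.*2)}) : (#|S| <= l.-1)%N -> (#|T| <= l)%N -> mm2 sg (wc b S) (wc b' T) = 0.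
Proof. by move=> H1 H2; rewrite mm2_wc free1 ?mulr0 //; lia. Qed.

Lemma hitRow (k j : 'I_(l.+1)) : (2 <= j)%N ->
  MM sg (monoF (LXsupp l k)) (monoF (LXsupp l j)) = 0.
Proof.
move=> Hj; have hidx : (l.-1 + j < l.*2)%N by have := ltn_ord j; lia.
apply: hitZ => //; exists (sg (Ordinal hidx)); rewrite sgK !inE /= eqxx orbT andbT.
rewrite sgrev /=; last by lia.
by apply/orP; left; have := ltn_ord j; have := ltn_ord k; lia.
Qed.

Lemma G4 b b' (k j : 'I_(l.+1)) : (2 <= j)%N ->
  mm2 sg (wc b (LXsupp l k)) (wc b' (LXsupp l j)) = 0.
Proof. by move=> H; rewrite mm2_wc /mm2 hitRow // mulr0 mulr0. Qed.

Lemma G3 b (j : 'I_(l.+1)) : (2 <= j)%N -> NN sg (wc b (LXsupp l j)) = 0.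
Proof. by move=> H; rewrite NN_wc /NN hitRow // mulr0. Qed.

Lemma NN_coset c s : s \in RM l.-1 (l.*2) ->
  NN sg (cLX c + s) =
  NN sg (wc (c ord0) (LXsupp l (ord0 : 'I_(l.+1)))) + NN sg (wc (c (inord 1)) (LXsupp l (inord 1 : 'I_(l.+1)))) +
  mm2 sg (wc (c ord0) (LXsupp l (ord0 : 'I_(l.+1)))) (wc (c (inord 1)) (LXsupp l (inord 1 : 'I_(l.+1)))).
Proof.
rewrite inE => /existsP[beta /eqP ->].
have -> : [ffun a => \sum_(S : {set 'I_(l.*2)} | (#|S| <= l.-1)%N) beta S * mono S a]
   = \sum_(S : {set 'I_(l.*2)} | (#|S| <= l.-1)%N) wc (beta S) S.
  by apply/ffunP => a; rewrite sum_ffunE ffunE; apply: eq_bigr => S _; rewrite ffunE.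
have -> : cLX c = \sum_j wc (c j) (LXsupp l j).
  by apply/ffunP => a; rewrite sum_ffunE ffunE; apply: eq_bigr => S _; rewrite ffunE.
have h1 : (1 < l.+1)%N by lia.
rewrite (bigD1 ord0) //= (bigD1 (inord 1)) /=; last by rewrite -val_eqE /= inordK.
rewrite (eq_bigl (fun j : 'I_(l.+1) => (2 <= j)%N)); last first.
  by move=> j; rewrite -!val_eqE /= inordK //; case: j => [[|[|j]] ?].
set r0 := wc _ (LXsupp l (ord0 : 'I_(l.+1))); set r1 := wc _ (LXsupp l (inord 1 : 'I_(l.+1))).
set R1 := \sum_(j | _) _; set s0 := \sum_(S | _) _.
have hR1 : NN sg R1 = 0.
  by apply: NN_sum => // [i Hi|i j Hi Hj]; [apply: G3 | apply: G4].
have hs : NN sg s0 = 0.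
  apply: NN_sum => // [i Hi|i j Hi Hj]; first exact: G1.
  by apply: G2 => //; exact: leq_trans Hj (leq_pred l).
have hR1s : mm2 sg R1 s0 = 0.
  rewrite mm2_sum big1 // => S HS; rewrite mm2C // mm2_sum big1 // => j Hj.
  by apply: G2 => //; apply: cardLX.
have hr : forall b (k : 'I_(l.+1)), mm2 sg (wc b (LXsupp l k)) (R1 + s0) = 0.
  move=> b k; rewrite mm2D !mm2_sum !big1 ?addr0 // => [S HS|jj Hj].
    by rewrite mm2C //; apply: G2 => //; apply: cardLX.
  exact: G4.
rewrite addrA -(addrA (r0 + r1)) (NN_add sgK (r0 + r1)) (NN_add sgK R1) hR1 hs hR1s.
rewrite mm2C // mm2D // mm2C // hr mm2C // hr.
rewrite NN_add //; rewrite !addr0; by [].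
Qed.

Lemma eigen c x (z : 'Z_4) :
  (forall s, s \in RM l.-1 (l.*2) -> NN sg (cLX c + s) = z) ->
  Fphase (tauG sg) x * logical c x = 'i ^+ val z * logical c x.
Proof.
move=> H.
case: (boolP [exists s, (s \in RM l.-1 (l.*2)) && (x == cLX c + s)]).
  by case/existsP => s /andP[Hs /eqP ->]; rewrite (Fphase_NN sgK (H s Hs)).
move=> Hn; have -> : logical c x = 0; last by rewrite !mulr0.
rewrite ffunE big1 // => s Hs; case: eqP => // Ex; case/negP: Hn.
by apply/existsP; exists s; rewrite Hs Ex eqxx.
Qed.

End Spec.

Section Inst.
Variable l : nat.
Hypothesis hl : (0 < l)%N.

Definition sgCZ (i : 'I_(l.*2)) : 'I_(l.*2) :=
  if ((i : nat) == l.-1) || ((i : nat) == l) then i else rev_ord i.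

Lemma sgCZK : involutive sgCZ.
Proof.
move=> i; rewrite /sgCZ; case h: (((i : nat) == l.-1) || ((i : nat) == l)); first by rewrite /= h.
rewrite ifF ?rev_ordK //=; apply/negbTE; have := ltn_ord i; move: h => /negbT; lia.
Qed.

Lemma sgCZrev (i : 'I_(l.*2)) : (l < i)%N -> sgCZ i = rev_ord i.
Proof. by move=> h; rewrite /sgCZ ifF //; lia. Qed.

Lemma revK : involutive (@rev_ord (l.*2)).
Proof. exact: rev_ordK. Qed.

Let S0 := LXsupp l (ord0 : 'I_(l.+1)).
Let S1 := LXsupp l (inord 1 : 'I_(l.+1)).
Lemma in1 : nat_of_ord (inord 1 : 'I_(l.+1)) = 1%N.
Proof. by rewrite inordK //; lia. Qed.

Lemma SS_vals : NN (@rev_ord _) (monoF S0) = 1 /\ NN (@rev_ord _) (monoF S1) = 1 /\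
   MM (@rev_ord _) (monoF S0) (monoF S1) = 0.
Proof.
split; [|split].
- apply: exact1; first exact: revK.
  move=> i; rewrite /S0 !inE /=; have := ltn_ord i; lia.
- apply: exact1; first exact: revK.
  move=> i; rewrite /S1 !inE /= in1; have := ltn_ord i; lia.
- have h : (l.-1 < l.*2)%N by lia.
  apply: hitZ; first exact: revK.
  exists (Ordinal h); rewrite /S0 /S1 !inE /= in1; lia.
Qed.

Lemma CZ_vals : NN sgCZ (monoF S0) = 0 /\ NN sgCZ (monoF S1) = 0 /\
   MM sgCZ (monoF S0) (monoF S1) = 1.
Proof.
split; [|split].
- have h : (l.-1 < l.*2)%N by lia.
  apply: hitZ; first exact: sgCZK.
  exists (Ordinal h); rewrite /sgCZ /= eqxx /= /S0 !inE /=; lia.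
- have h : (l < l.*2)%N by lia.
  apply: hitZ; first exact: sgCZK.
  exists (Ordinal h); rewrite /sgCZ /= eqxx orbT /S1 !inE /= in1; lia.
- apply: exact1; first exact: sgCZK.
  move=> i; rewrite /sgCZ; case: ifP => h; rewrite /S0 /S1 !inE /= in1;
  have := ltn_ord i; move: h; lia.
Qed.

End Inst.

Lemma code_pres (l : nat) (tau : Pt (l.*2) -> Pt (l.*2)) (f : {ffun 'I_(l.+1) -> 'F_2} -> algC) :
  (forall c x, Fphase tau x * logical c x = f c * logical c x) ->
  forall psi, codespace psi -> codespace (Fcirc tau psi).
Proof.
move=> H psi [alpha ->]; rewrite /codespace; move: H; move: (@logical l) => lg H.
exists (fun c => alpha c * f c).
apply/ffunP => x; rewrite !ffunE mulr_sumr; apply: eq_bigr => c _.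
by rewrite mulrCA H mulrA.
Qed.

Lemma eig_ffun (l : nat) (tau : Pt (l.*2) -> Pt (l.*2)) c (z : algC) :
  (forall x, Fphase tau x * logical c x = z * logical c x) ->
  Fcirc tau (logical c) = [ffun x => z * logical c x].
Proof. move: (@logical l) => lg H; by apply/ffunP => x; rewrite !ffunE H. Qed.

Unset Implicit Arguments.
Theorem mainTheorem14 (l : nat) (hl : (1 <= l)%N) :
  ((forall psi, codespace psi -> codespace (Fcirc (@tauSS l) psi)) /\
   (forall c : {ffun 'I_(l.+1) -> 'F_2},
      Fcirc (@tauSS l) (logical c)
      = [ffun x => (bitphase (c ord0) 'i * bitphase (c (inord 1)) 'i) * logical c x])) /\
  ((forall psi, codespace psi -> codespace (Fcirc (@tauCZ l) psi)) /\
   (forall c : {ffun 'I_(l.+1) -> 'F_2},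
      Fcirc (@tauCZ l) (logical c)
      = [ffun x => (if (c ord0 == 1) && (c (inord 1) == 1) then -1 else 1) * logical c x])).
Proof.
have ESS : @tauSS l = tauG (@rev_ord (l.*2)) by apply: functional_extensionality.
have ECZ : @tauCZ l = tauG (@sgCZ l).
  apply: functional_extensionality => a; apply/ffunP => i; rewrite !ffunE /sgCZ /=.
  by case: ifP.
have SSe : forall c x, Fphase (@tauSS l) x * logical c x =
   (bitphase (c ord0) 'i * bitphase (c (inord 1)) 'i) * logical c x.
  move=> c x; rewrite ESS (@eigen l _ (@revK l) c x (L (c ord0) + L (c (inord 1)))).
    by case: (F2cases (c ord0)) => ->; case: (F2cases (c (inord 1))) => ->;
      rewrite ?L0 ?L1 /bitphase //= ?expr2 ?mulr1 ?mul1r.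
  move=> s Hs; rewrite NN_coset //; last exact: revK.
  rewrite !NN_wc (mm2_wc (@revK l)) /mm2; have [h0 [h1 h2]] := SS_vals hl.
  by rewrite h0 h1 h2 !mulr1 !mulr0 addr0.
have CZe : forall c x, Fphase (@tauCZ l) x * logical c x =
   (if (c ord0 == 1) && (c (inord 1) == 1) then -1 else 1) * logical c x.
  move=> c x; rewrite ECZ (@eigen l _ (@sgCZK l hl) c x (L (c ord0) * L (c (inord 1)) * 2%:R)).
    by case: (F2cases (c ord0)) => ->; case: (F2cases (c (inord 1))) => ->;
      rewrite ?L0 ?L1 /= ?mul0r ?mulr0 ?mul1r //= -?expr2 ?sqrCi.
  move=> s Hs; rewrite NN_coset //; [|exact: (@sgCZK l hl)|exact: (@sgCZrev l hl)].
  rewrite !NN_wc (mm2_wc (@sgCZK l hl)) /mm2; have [h0 [h1 h2]] := CZ_vals hl.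
  by rewrite h0 h1 h2 !mulr0 !add0r mulr1.
split; split.
- exact: code_pres SSe.
- by move=> c; apply: eig_ffun => x; apply: SSe.
- exact: code_pres CZe.
- by move=> c; apply: eig_ffun => x; apply: CZe.
Qed.
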